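(* For all $m,n\in\mathbb{N}$ with $m\le n$, the minimization problem defining $d_{m,n}$ admits an optimal transport plan $z\in\mathcal{F}_{m,n}$ that is simple, i.e. satisfies $z_{i,i}=\min\{\pi^m_i,\pi^n_i\}$ for all $i=0,\dots,m$.
   Context: Let $\mathbb{N}=\{0,1,2,\dots\}$. Fix a sequence $(\pi^n)_{n\in\mathbb{N}}$ where each $\pi^n=(\pi^n_i)_{i\in\mathbb{N}}$ is a probability distribution on $\mathbb{N}$ with support contained in $\{0,\dots,n\}$, and $\pi^n\ne\pi^m$ for $m\ne n$. Define reals $d_{m,n}$ for $m,n\in\mathbb{N}\cup\{-1\}$ recursively as follows: $d_{-1,-1}=0$, $d_{-1,j}=d_{j,-1}=1$ for $j\in\mathbb{N}$, and for $m,n\in\mathbb{N}$, $$d_{m,n}=\min_{z\in\mathcal{F}_{m,n}}\sum_{i=0}^m\sum_{j=0}^n z_{i,j}\,d_{i-1,j-1},$$ where $\mathcal{F}_{m,n}$ is the set of transport plans from $\pi^m$ to $\pi^n$, i.e. arrays $z=(z_{i,j})_{0\le i\le m,\,0\le j\le n}$ with $z_{i,j}\ge0$, $\sum_{j=0}^n z_{i,j}=\pi^m_i$ for all $i\le m$, and $\sum_{i=0}^m z_{i,j}=\pi^n_j$ for all $j\le n$. An optimal transport for $d_{m,n}$ is a minimizer of this problem. *)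

(* Defs.v *)
From HB Require Import structures.
From mathcomp Require Import all_boot all_order all_algebra.
From mathcomp Require Import reals.
Set Implicit Arguments. Unset Strict Implicit. Unset Printing Implicit Defensive.
Import Order.TTheory GRing.Theory Num.Theory.
Local Open Scope ring_scope.

Definition is_distr_seq (R : realType) (pi : nat -> nat -> R) : Prop :=
  forall n : nat,
    (forall i, 0 <= pi n i) /\
    (forall i, (n < i)%N -> pi n i = 0) /\
    \sum_(i < n.+1) pi n i = 1.

Definition is_plan (R : realType) (pi : nat -> nat -> R) (m n : nat)
    (z : 'M[R]_(m.+1, n.+1)) : Prop :=
  (forall i j, 0 <= z i j) /\
  (forall i : 'I_m.+1, \sum_(j < n.+1) z i j = pi m i) /\
  (forall j : 'I_n.+1, \sum_(i < m.+1) z i j = pi n j).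

(* d_ext d i j = d_{i-1,j-1}, where d : nat -> nat -> R stores d_{m,n}
   for m,n in N and the boundary values d_{-1,-1}=0, d_{-1,j}=d_{j,-1}=1. *)
Definition d_ext (R : realType) (d : nat -> nat -> R) (i j : nat) : R :=
  if (i == 0%N) && (j == 0%N) then 0
  else if (i == 0%N) || (j == 0%N) then 1
  else d i.-1 j.-1.

Definition cost (R : realType) (d : nat -> nat -> R) (m n : nat)
    (z : 'M[R]_(m.+1, n.+1)) : R :=
  \sum_(i < m.+1) \sum_(j < n.+1) z i j * d_ext d i j.

Definition is_optimal (R : realType) (pi : nat -> nat -> R)
    (d : nat -> nat -> R) (m n : nat) (z : 'M[R]_(m.+1, n.+1)) : Prop :=
  is_plan pi z /\ forall z' : 'M[R]_(m.+1, n.+1), is_plan pi z' -> cost d z <= cost d z'.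

Definition is_d (R : realType) (pi : nat -> nat -> R) (d : nat -> nat -> R)
    : Prop :=
  forall m n : nat,
    (exists z : 'M[R]_(m.+1, n.+1), is_plan pi z /\ cost d z = d m n) /\
    (forall z : 'M[R]_(m.+1, n.+1), is_plan pi z -> d m n <= cost d z).

(* Main.v *)
Require Import Defs.
From HB Require Import structures.
From mathcomp Require Import all_boot all_order all_algebra.
From mathcomp Require Import reals.
From mathcomp Require Import ring lra zify.
Import Order.TTheory GRing.Theory Num.Theory.
Local Open Scope ring_scope.
Set Implicit Arguments. Unset Strict Implicit.

Lemma dext00 (R : realType) (d : nat -> nat -> R) : d_ext d 0 0 = 0.
Proof. by []. Qed.
Lemma dext0S (R : realType) (d : nat -> nat -> R) b : d_ext d 0 b.+1 = 1.
Proof. by []. Qed.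
Lemma dextS0 (R : realType) (d : nat -> nat -> R) a : d_ext d a.+1 0 = 1.
Proof. by []. Qed.
Lemma dextSS (R : realType) (d : nat -> nat -> R) a b : d_ext d a.+1 b.+1 = d a b.
Proof. by []. Qed.

Lemma plan_mass (R : realType) (pi : nat -> nat -> R) m n (z : 'M[R]_(m.+1, n.+1)) :
  is_distr_seq pi -> is_plan pi z -> \sum_i \sum_j z i j = 1.
Proof.
move=> Hpi [_ [Hr _]]; rewrite -(proj2 (proj2 (Hpi m))).
by apply: eq_bigr => i _; rewrite Hr.
Qed.

Lemma plan_le_row (R : realType) (pi : nat -> nat -> R) m n (z : 'M[R]_(m.+1, n.+1)) i j :
  is_plan pi z -> z i j <= pi m i.
Proof.
move=> [H0 [Hr _]]; rewrite -Hr (bigD1 j) //= lerDl.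
by apply: sumr_ge0 => k _.
Qed.

Lemma plan_le_col (R : realType) (pi : nat -> nat -> R) m n (z : 'M[R]_(m.+1, n.+1)) i j :
  is_plan pi z -> z i j <= pi n j.
Proof.
move=> [H0 [_ Hc]]; rewrite -Hc (bigD1 i) //= lerDl.
by apply: sumr_ge0 => k _.
Qed.

Lemma cost_bounds (R : realType) (pi : nat -> nat -> R) (d : nat -> nat -> R) m n
  (z : 'M[R]_(m.+1, n.+1)) :
  is_distr_seq pi -> is_plan pi z ->
  (forall i j : nat, (i <= m)%N -> (j <= n)%N -> 0 <= d_ext d i j <= 1) ->
  0 <= cost d z <= 1.
Proof.
move=> Hpi Hz HD; rewrite /cost; apply/andP; split.
  apply: sumr_ge0 => i _; apply: sumr_ge0 => j _.
  have /andP[h1 h2] := HD i j (ltn_ord i) (ltn_ord j).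
  have := (proj1 Hz) i j; nra.
rewrite -(plan_mass Hpi Hz); apply: ler_sum => i _; apply: ler_sum => j _.
have /andP[h1 h2] := HD i j (ltn_ord i) (ltn_ord j).
have := (proj1 Hz) i j; nra.
Qed.

Lemma D_bounds (R : realType) (pi : nat -> nat -> R) (d : nat -> nat -> R) :
  is_distr_seq pi -> is_d pi d -> forall a b, 0 <= d_ext d a b <= 1.
Proof.
move=> Hpi Hd.
suff H : forall N a b, (a + b <= N)%N -> 0 <= d_ext d a b <= 1.
  by move=> a b; apply: (H (a + b)%N).
elim=> [|N IH] [|a] [|b] //= Hab; rewrite ?dext00 ?dext0S ?dextS0 ?lexx ?ler01 //.
rewrite dextSS.
have [[z [Hz <-]] _] := Hd a b.
apply: (@cost_bounds R pi d a b z Hpi Hz) => i j hi hj; apply: IH.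
lia.
Qed.
Lemma sum_delta (R : realType) N (i0 : 'I_N) (F : 'I_N -> R) :
  \sum_(k < N) (k == i0)%:R * F k = F i0.
Proof.
rewrite (bigD1 i0) //= eqxx mul1r big1 ?addr0 // => k /negPf ->; by rewrite mul0r.
Qed.

Lemma sum_delta_r (R : realType) N (i0 : 'I_N) (F : 'I_N -> R) :
  \sum_(k < N) F k * (k == i0)%:R = F i0.
Proof.
rewrite (bigD1 i0) //= eqxx mulr1 big1 ?addr0 // => k /negPf ->; by rewrite mulr0.
Qed.

Lemma d_diag (R : realType) (pi : nat -> nat -> R) (d : nat -> nat -> R) :
  is_distr_seq pi -> is_d pi d -> forall k, d k k = 0.
Proof.
move=> Hpi Hd.
elim/ltn_ind=> k IH.
apply/le_anti/andP; split; last first.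
  by have /andP[] := D_bounds Hpi Hd k.+1 k.+1.
pose z : 'M[R]_(k.+1, k.+1) := \matrix_(i, j) ((i == j)%:R * pi k i).
have Hz : is_plan pi z.
  split; [|split].
  - move=> i j; rewrite mxE; have := (proj1 (Hpi k)) i.
    case: (i == j); rewrite ?mul1r ?mul0r //.
  - move=> i; under eq_bigr do rewrite mxE.
    rewrite (bigD1 i) //= eqxx mul1r big1 ?addr0 // => j /negPf.
    by rewrite eq_sym => ->; rewrite mul0r.
  - move=> j; under eq_bigr do rewrite mxE.
    by rewrite sum_delta.
apply: le_trans (proj2 (Hd k k) z Hz) _.
rewrite /cost big1 // => i _; rewrite big1 // => j _; rewrite mxE.
case: eqP => [<-|_]; rewrite ?mul0r //.
case: (nat_of_ord i) (ltn_ord i) => [|i'] hi; first by rewrite dext00 mulr0.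
by rewrite dextSS IH ?mulr0.
Qed.
Lemma divmulK (R : realType) (u v : R) : 0 <= u -> u <= v -> u / v * v = u.
Proof.
move=> h0 h1; have [v0|nz] := eqVneq v 0.
  subst v; have u0 : u = 0 by apply/le_anti; rewrite h0 h1.
  by rewrite u0 !mul0r.
by rewrite divfK.
Qed.

Lemma glue (R : realType) (pi : nat -> nat -> R) (d : nat -> nat -> R) a b c :
  is_distr_seq pi -> is_d pi d ->
  (forall i j k : nat, (i <= a)%N -> (j <= b)%N -> (k <= c)%N ->
     d_ext d i k <= d_ext d i j + d_ext d j k) ->
  d a c <= d a b + d b c.
Proof.
move=> Hpi Hd Htri.
have [[x [Hx <-]] _] := Hd a b.
have [[y [Hy <-]] _] := Hd b c.
have [x0 [xr xc]] := Hx; have [y0 [yr yc]] := Hy.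
pose t i j k := x i j * y j k / pi b j.
have t0 i j k : 0 <= t i j k.
  rewrite /t; apply: divr_ge0; first exact: mulr_ge0.
  exact: (proj1 (Hpi b)).
have tk i j : \sum_(k < c.+1) t i j k = x i j.
  rewrite /t; under eq_bigr do rewrite mulrAC.
  by rewrite -mulr_sumr yr (divmulK (x0 i j) (plan_le_col i j Hx)).
have ti j k : \sum_(i < a.+1) t i j k = y j k.
  rewrite /t; under eq_bigr do rewrite -mulrA.
  by rewrite -mulr_suml xc mulrC (divmulK (y0 j k) (plan_le_row j k Hy)).
pose w : 'M[R]_(a.+1, c.+1) := \matrix_(i, k) \sum_(j < b.+1) t i j k.
have Hw : is_plan pi w.
  split; [|split].
  - by move=> i k; rewrite mxE; apply: sumr_ge0.
  - move=> i; under eq_bigr do rewrite mxE.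
    rewrite exchange_big /=; under eq_bigr do rewrite tk.
    exact: xr.
  - move=> k; under eq_bigr do rewrite mxE.
    rewrite exchange_big /=; under eq_bigr do rewrite ti.
    exact: yc.
apply: le_trans (proj2 (Hd a c) w Hw) _.
rewrite /cost.
apply: (@le_trans _ _ (\sum_(i < a.+1) \sum_(k < c.+1) \sum_(j < b.+1)
   (t i j k * d_ext d i j + t i j k * d_ext d j k))).
  apply: ler_sum => i _; apply: ler_sum => k _; rewrite mxE mulr_suml.
  apply: ler_sum => j _; rewrite -mulrDr; apply: ler_wpM2l => //.
  exact: Htri (ltn_ord i) (ltn_ord j) (ltn_ord k).
under eq_bigr do under eq_bigr do rewrite big_split /=.
under eq_bigr do rewrite big_split /=.
rewrite big_split /= lerD //.
  rewrite le_eqVlt; apply/orP; left; apply/eqP.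
  apply: eq_bigr => i _. rewrite exchange_big /=. apply: eq_bigr => j _.
  by rewrite -mulr_suml tk.
rewrite le_eqVlt; apply/orP; left; apply/eqP.
rewrite exchange_big /=; under eq_bigr do rewrite exchange_big /=.
rewrite exchange_big /=; apply: eq_bigr => j _; apply: eq_bigr => k _.
by rewrite -mulr_suml ti.
Qed.
Lemma D_tri (R : realType) (pi : nat -> nat -> R) (d : nat -> nat -> R) :
  is_distr_seq pi -> is_d pi d ->
  forall a b c, d_ext d a c <= d_ext d a b + d_ext d b c.
Proof.
move=> Hpi Hd.
have HB := D_bounds Hpi Hd.
suff H : forall N a b c, (a + b + c <= N)%N -> d_ext d a c <= d_ext d a b + d_ext d b c.
  by move=> a b c; apply: (H (a + b + c)%N).
elim=> [|N IH] a b c Habc.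
  have -> : a = 0%N by lia.
  have -> : b = 0%N by lia.
  have -> : c = 0%N by lia.
  by rewrite dext00 addr0.
have /andP[h1 h2] := HB a b; have /andP[h3 h4] := HB b c; have /andP[h5 h6] := HB a c.
case: a Habc h1 h2 h5 h6 => [|a]; case: b h3 h4 => [|b]; case: c => [|c];
  rewrite ?dext00 ?dext0S ?dextS0 ?dextSS => h3 h4 Habc h1 h2 h5 h6; try lra.
apply: glue => // i j k hi hj hk; apply: IH; lia.
Qed.
Lemma sum_delta1 (R : realType) N (i0 : 'I_N) :
  \sum_(k < N) (k == i0)%:R = 1 :> R.
Proof.
rewrite (bigD1 i0) //= eqxx big1 ?addr0 // => k /negPf ->; by [].
Qed.

Lemma exchange (R : realType) (pi : nat -> nat -> R) (d : nat -> nat -> R) m n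
  (z : 'M[R]_(m.+1, n.+1)) (i0 : 'I_m.+1) :
  is_distr_seq pi -> is_d pi d -> (m <= n)%N -> is_plan pi z ->
  exists z' : 'M[R]_(m.+1, n.+1), is_plan pi z' /\ cost d z' <= cost d z /\
    z' i0 (inord i0) = Num.min (pi m i0) (pi n i0) /\
    forall k j, k != i0 -> j != inord i0 -> z k j <= z' k j.
Proof.
move=> Hpi Hd Hmn Hz.
have [z0 [zr zc]] := Hz.
set i1 : 'I_n.+1 := inord i0.
have vi1 : (i1 : nat) = i0 by rewrite inordK // ltnS (leq_trans _ Hmn) // -ltnS.
pose A k := if k == i0 then 0 else z k i1.
pose B j := if j == i1 then 0 else z i0 j.
have A0 k : 0 <= A k by rewrite /A; case: ifP.
have B0 j : 0 <= B j by rewrite /B; case: ifP.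
pose o := \sum_j B j.
pose inn := \sum_k A k.
have o0 : 0 <= o by apply: sumr_ge0.
have inn0 : 0 <= inn by apply: sumr_ge0.
pose r := Num.min o inn.
have hr : (r = o /\ o <= inn) \/ (r = inn /\ inn <= o).
  rewrite /r; case/orP: (le_total o inn) => h; [left; split => //; exact: min_l h | right; split => //; exact: min_r h].
have r0 : 0 <= r by case: hr => -[-> _].
have hro : r <= o by case: hr => -[-> h]; rewrite ?lexx.
have hri : r <= inn by case: hr => -[-> h]; rewrite ?lexx.
pose s := r / (o * inn).
have s0 : 0 <= s by apply: divr_ge0 => //; apply: mulr_ge0.
have hs : s * inn * o = r.
  have [oz|onz] := eqVneq o 0.
    have rz : r = 0 by lra.
    by rewrite /s rz !mul0r.
  have [iz|inz] := eqVneq inn 0.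
    have rz : r = 0 by lra.
    by rewrite /s rz !mul0r.
  by rewrite /s; field; rewrite inz onz.
have so1 : s * o <= 1.
  have [iz|inz] := eqVneq inn 0.
    by rewrite /s iz mulr0 invr0 mulr0 mul0r ler01.
  have ip : 0 < inn by rewrite lt_def inz inn0.
  by rewrite -(ler_pM2r ip) mul1r -mulrA (mulrC o) mulrA hs.
have si1 : s * inn <= 1.
  have [oz|onz] := eqVneq o 0.
    by rewrite /s oz mul0r invr0 mulr0 mul0r ler01.
  have op : 0 < o by rewrite lt_def onz o0.
  by rewrite -(ler_pM2r op) mul1r hs.
pose z' : 'M[R]_(m.+1, n.+1) := \matrix_(k, j)
  (z k j + s * A k * B j - s * inn * (k == i0)%:R * B j
     - s * o * A k * (j == i1)%:R + r * (k == i0)%:R * (j == i1)%:R).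
have Hz' : is_plan pi z'.
  split; [|split].
  - move=> k j; rewrite mxE.
    have zkj := z0 k j.
    have [hk|hk] := eqVneq k i0; have [hj|hj] := eqVneq j i1.
    + subst k j; rewrite /A /B !eqxx /=; lra.
    + subst k; rewrite /A /B eqxx (negPf hj) /=.
      have : s * inn * z i0 j <= z i0 j by rewrite -{2}(mul1r (z i0 j)) ler_wpM2r.
      lra.
    + subst j; rewrite /A /B (negPf hk) eqxx /=.
      have : s * o * z k i1 <= z k i1 by rewrite -{2}(mul1r (z k i1)) ler_wpM2r.
      lra.
    +
      have : 0 <= s * A k * B j by rewrite mulr_ge0 // mulr_ge0.
      rewrite !mulr0 !mul0r !subr0 !addr0.
      lra.
  - move=> k; under eq_bigr do rewrite mxE.
    rewrite !big_split /= !sumrN -!mulr_sumr sum_delta1 zr -hs -/o.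
    ring.
  - move=> j; under eq_bigr do rewrite mxE.
    rewrite !big_split /= !sumrN -!mulr_suml -!mulr_sumr sum_delta1 zc -hs -/inn.
    ring.
have pm : pi m i0 = z i0 i1 + o.
  have -> : o = \sum_(j | j != i1) z i0 j.
    rewrite /o (bigD1 i1) //= /B eqxx add0r.
    by apply: eq_bigr => j /negPf ->.
  by rewrite -zr (bigD1 i1).
have pn : pi n i0 = z i0 i1 + inn.
  have -> : inn = \sum_(k | k != i0) z k i1.
    rewrite /inn (bigD1 i0) //= /A eqxx add0r.
    by apply: eq_bigr => k /negPf ->.
  by rewrite -vi1 -zc (bigD1 i0).
have D00 : d_ext d i0 i0 = 0.
  case: (nat_of_ord i0) => [|i]; first by rewrite dext00.
  by rewrite dextSS (d_diag Hpi Hd).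
exists z'; split => //; split; last split.
- have E k j : z' k j * d_ext d k j = z k j * d_ext d k j + s * (A k * B j * d_ext d k j)
      - (k == i0)%:R * (s * inn * (B j * d_ext d k j))
      - (j == i1)%:R * (s * o * (A k * d_ext d k j))
      + (k == i0)%:R * ((j == i1)%:R * (r * d_ext d k j)).
    by rewrite mxE; ring.
  have Ecost : cost d z' = cost d z
      + s * (\sum_k \sum_j A k * B j * d_ext d k j)
      - s * inn * (\sum_j B j * d_ext d i0 j)
      - s * o * (\sum_k A k * d_ext d k i1) + r * d_ext d i0 i1.
    rewrite /cost.
    under eq_bigr => k _.
      under eq_bigr => j _ do rewrite E.
      rewrite !big_split /= !sumrN -!mulr_sumr sum_delta.
      over.
    rewrite !big_split /= !sumrN -!mulr_sumr !sum_delta.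
    by [].
  have tri := D_tri Hpi Hd.
  have H1 : \sum_k \sum_j A k * B j * d_ext d k j <=
            \sum_k \sum_j A k * B j * (d_ext d k i0 + d_ext d i0 j).
    apply: ler_sum => k _; apply: ler_sum => j _.
    by apply: ler_wpM2l; [apply: mulr_ge0 | apply: tri].
  have H2 : \sum_k \sum_j A k * B j * (d_ext d k i0 + d_ext d i0 j) =
            (\sum_k A k * d_ext d k i0) * o + inn * \sum_j B j * d_ext d i0 j.
    rewrite /inn [X in _ = X + _]mulr_suml [X in _ = _ + X]mulr_suml -big_split /=.
    apply: eq_bigr => k _.
    rewrite /o mulr_sumr mulr_sumr -big_split /=.
    by apply: eq_bigr => j _; ring.
  rewrite H2 in H1; have H3 := ler_wpM2l s0 H1.
  rewrite Ecost vi1 D00 mulr0 addr0.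
  move: H3; rewrite mulrDr.
  nra.
- rewrite mxE /A /B !eqxx /= pm pn.
  case: hr => -[-> h]; [rewrite min_l | rewrite min_r]; rewrite ?lerD2l //; lra.
- move=> k j hk hj; rewrite mxE (negPf hk) (negPf hj) /A /B (negPf hk) (negPf hj).
  rewrite !mulr0 !mul0r !subr0 !addr0 lerDl.
  by rewrite mulr_ge0 // mulr_ge0.
Qed.
Unset Implicit Arguments.
Set Strict Implicit.

Theorem proposition1 (R : realType) (pi : nat -> nat -> R)
  (d : nat -> nat -> R) :
  is_distr_seq pi ->
  (forall m n : nat, m <> n -> pi m <> pi n) ->
  is_d pi d ->
  forall m n : nat, (m <= n)%N ->
    exists z : 'M[R]_(m.+1, n.+1),
      is_optimal pi d z /\
      forall i : 'I_m.+1, z i (inord i) = Num.min (pi m i) (pi n i).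
Proof.
move=> Hpi _ Hd m n Hmn.
suff H : forall t, (t <= m.+1)%N -> exists z : 'M[R]_(m.+1, n.+1), is_optimal pi d z /\
    forall i : 'I_m.+1, (i < t)%N -> z i (inord i) = Num.min (pi m i) (pi n i).
  have [z [Hz H']] := H m.+1 (leqnn _).
  by exists z; split => // i; apply: H' (ltn_ord i).
elim=> [|t IH] ht.
  have [[z [Hz Hc]] Hmin] := Hd m n.
  exists z; split => //; split => // z' Hz'; rewrite Hc; exact: Hmin.
have [z [[Hz Hopt] Hdiag]] := IH (ltnW ht).
have [z' [Hz' [Hc [Hd0 Hmono]]]] := @exchange R pi d m n z (Ordinal ht) Hpi Hd Hmn Hz.
exists z'; split.
  by split => // z'' H''; exact: le_trans Hc (Hopt z'' H'').
move=> i hi.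
have [hit|hit] := eqVneq i (Ordinal ht).
  by rewrite hit.
have hv : (i : nat) != t.
  by move: hit; apply: contra => /eqP h; apply/eqP/val_inj.
have hit' : (i < t)%N by rewrite ltn_neqAle hv -ltnS.
have hin : (i < n.+1)%N by rewrite ltnS (leq_trans _ Hmn) // -ltnS.
apply/le_anti/andP; split.
  rewrite le_min (plan_le_row _ _ Hz') /=.
  by rewrite -{2}(inordK hin) (plan_le_col _ _ Hz').
rewrite -(Hdiag i hit'); apply: Hmono => //.
apply: contra hv => /eqP /(congr1 val).
rewrite /= inordK // inordK //; first by move=> ->.
by rewrite ltnS (leq_trans _ Hmn) // -ltnS.
Qed.
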